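(* Let $N\ge 2$, $R>0$, $p>0$ and consider $$\Delta u=v^p,\qquad \Delta v=e^{|\nabla u|}\qquad\text{in } B_R.$$ Then every positive radial solution $(u,v)$ of this system is either bounded (both $u$ and $v$ bounded in $B_R$) or satisfies: $u$ is bounded in $B_R$ and $\lim_{|x|\nearrow R}v(x)=\infty$.
   Context: $B_R\subset\mathbb{R}^N$ is the open ball of radius $R$ centred at the origin. A positive radial solution is a pair of radially symmetric functions $u,v\in C^2(B_R)$, positive in $B_R$, satisfying the equations pointwise. *)

(* Defs.v *)
From Stdlib Require Import Reals Lra Lia.
Open Scope R_scope.

(* Points of R^N are represented as [nat -> R]; only the coordinates
   0..N-1 are ever used (norm, partial derivatives). *)
Definition vec := nat -> R.

Fixpoint sumN (n : nat) (f : nat -> R) : R :=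
  match n with
  | O => 0
  | S k => sumN k f + f k
  end.

Definition normN (N : nat) (x : vec) : R := sqrt (sumN N (fun i => x i ^ 2)).

Definition vsub (x y : vec) : vec := fun i => x i - y i.

Definition in_ball (N : nat) (R0 : R) (x : vec) : Prop := normN N x < R0.

Definition shift (x : vec) (i : nat) (t : R) : vec :=
  fun j => if Nat.eqb j i then x j + t else x j.

Definition is_partial (f : vec -> R) (x : vec) (i : nat) (l : R) : Prop :=
  derivable_pt_lim (fun t => f (shift x i t)) 0 l.

Definition cont_on_ball (N : nat) (R0 : R) (g : vec -> R) : Prop :=
  forall x, in_ball N R0 x ->
  forall eps, 0 < eps -> exists delta, 0 < delta /\
    forall y, in_ball N R0 y -> normN N (vsub y x) < delta ->
      Rabs (g y - g x) < eps.

(* f is C^2 on B_R, with first partials Df i = d_i f and second partials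
   D2f i j = d_j d_i f, all existing and continuous in B_R. *)
Definition C2_on_ball (N : nat) (R0 : R) (f : vec -> R)
    (Df : nat -> vec -> R) (D2f : nat -> nat -> vec -> R) : Prop :=
  (forall x, in_ball N R0 x -> forall i, (i < N)%nat ->
     is_partial f x i (Df i x) /\
     forall j, (j < N)%nat -> is_partial (Df i) x j (D2f i j x)) /\
  cont_on_ball N R0 f /\
  (forall i, (i < N)%nat -> cont_on_ball N R0 (Df i)) /\
  (forall i j, (i < N)%nat -> (j < N)%nat -> cont_on_ball N R0 (D2f i j)).

Definition laplacian (N : nat) (D2f : nat -> nat -> vec -> R) (x : vec) : R :=
  sumN N (fun i => D2f i i x).
Definition grad_norm (N : nat) (Df : nat -> vec -> R) (x : vec) : R :=
  sqrt (sumN N (fun i => Df i x ^ 2)).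

Definition radial_on_ball (N : nat) (R0 : R) (f : vec -> R) : Prop :=
  forall x y, in_ball N R0 x -> in_ball N R0 y -> normN N x = normN N y ->
    f x = f y.

Definition pos_radial_solution (N : nat) (R0 p : R) (u v : vec -> R) : Prop :=
  exists (Du : nat -> vec -> R) (D2u : nat -> nat -> vec -> R)
         (Dv : nat -> vec -> R) (D2v : nat -> nat -> vec -> R),
    C2_on_ball N R0 u Du D2u /\ C2_on_ball N R0 v Dv D2v /\
    radial_on_ball N R0 u /\ radial_on_ball N R0 v /\
    (forall x, in_ball N R0 x -> 0 < u x /\ 0 < v x) /\
    (forall x, in_ball N R0 x ->
       laplacian N D2u x = Rpower (v x) p /\
       laplacian N D2v x = exp (grad_norm N Du x)).

Definition bounded_on_ball (N : nat) (R0 : R) (f : vec -> R) : Prop :=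
  exists M, forall x, in_ball N R0 x -> Rabs (f x) <= M.

Definition blows_up_at_boundary (N : nat) (R0 : R) (f : vec -> R) : Prop :=
  forall M, exists delta, 0 < delta /\
    forall x, in_ball N R0 x -> R0 - delta < normN N x -> M < f x.

(* Main.v *)
Require Import Defs.
From Stdlib Require Import Reals Lra Lia Psatz Classical FunctionalExtensionality.
Open Scope R_scope.

Lemma mvt_lb (h h' : R -> R) a b m :
  a <= b -> (forall c, a <= c <= b -> derivable_pt_lim h c (h' c)) ->
  (forall c, a < c < b -> m <= h' c) -> m * (b - a) <= h b - h a.
Proof.
  intros Hab Hd Hm. destruct (Req_dec a b) as [<-|Hne].
  - replace (a - a) with 0 by ring. lra.
  - destruct (MVT_cor2 h h' a b) as [c [Hc1 Hc2]]; [lra| exact Hd|]. rewrite Hc1.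
    apply Rmult_le_compat_r; [lra| apply Hm; lra].
Qed.

Lemma mvt_ub (h h' : R -> R) a b m :
  a <= b -> (forall c, a <= c <= b -> derivable_pt_lim h c (h' c)) ->
  (forall c, a < c < b -> h' c <= m) -> h b - h a <= m * (b - a).
Proof.
  intros Hab Hd Hm. destruct (Req_dec a b) as [<-|Hne].
  - replace (a - a) with 0 by ring. lra.
  - destruct (MVT_cor2 h h' a b) as [c [Hc1 Hc2]]; [lra| exact Hd|]. rewrite Hc1.
    apply Rmult_le_compat_r; [lra| apply Hm; lra].
Qed.

Lemma dpl_eq f x l1 l2 : derivable_pt_lim f x l1 -> l1 = l2 -> derivable_pt_lim f x l2.
Proof. intros H ->; exact H. Qed.

Lemma Rpower_pos x y : 0 < Rpower x y.
Proof. unfold Rpower; apply exp_pos. Qed.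

Lemma W_deriv (n : nat) (y1 y2 : R -> R) t :
  (1 <= n)%nat -> t <> 0 -> derivable_pt_lim y1 t (y2 t) ->
  derivable_pt_lim (fun s => s ^ n * y1 s) t (t ^ n * (y2 t + INR n * y1 t / t)).
Proof.
  intros Hn Ht Hd.
  pose proof (derivable_pt_lim_mult (fun s => s ^ n) y1 t _ _ (derivable_pt_lim_pow t n) Hd) as H.
  unfold mult_fct in H. eapply dpl_eq; [exact H|].
  destruct n as [|m]; [lia|]. simpl Init.Nat.pred. simpl pow. field. exact Ht.
Qed.

Lemma pow_le_self s n : 0 <= s <= 1 -> (1 <= n)%nat -> s ^ n <= s.
Proof.
  intros Hs Hn. destruct n as [|m]; [lia|]. simpl.
  assert (s ^ m <= 1). { rewrite <- (pow1 m). apply pow_incr. lra. }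
  assert (0 <= s ^ m) by (apply pow_le; lra). nra.
Qed.

Lemma weighted (R0 : R) (n : nat) (y1 y2 : R -> R) :
  (1 <= n)%nat -> 0 < R0 ->
  (forall t, 0 <= t < R0 -> derivable_pt_lim y1 t (y2 t)) ->
  continuity_pt y1 0 ->
  (forall t, 0 < t < R0 -> 0 <= y2 t + INR n * y1 t / t) ->
  forall t, 0 < t < R0 -> 0 <= t ^ n * y1 t.
Proof.
  intros Hn HR Hd Hc Hpos t Ht.
  set (W := fun s => s ^ n * y1 s).
  assert (HW : forall s, 0 < s <= t -> W s <= W t).
  { intros s Hs. assert (0 <= W t - W s); [|lra].
    replace (W t - W s) with (W t - W s) by ring.
    apply Rle_trans with (0 * (t - s)); [lra|].
    apply mvt_lb with (h' := fun c => c ^ n * (y2 c + INR n * y1 c / c)); [lra| |].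
    - intros c Hc1. unfold W. apply W_deriv; [lia|lra|]. apply Hd; lra.
    - intros c Hc1. apply Rmult_le_pos; [apply pow_le; lra|]. apply Hpos; lra. }
  destruct (Hc 1 Rlt_0_1) as [alp [Halp Hal]].
  set (M := Rabs (y1 0) + 1).
  assert (HM : forall s, 0 < s < alp -> Rabs (y1 s) <= M).
  { intros s Hs. assert (Hh := Hal s). simpl in Hh. unfold R_dist in Hh.
    assert (Rabs (y1 s - y1 0) < 1).
    { apply Hh. split; [split; [exact I|lra]|]. rewrite Rminus_0_r, Rabs_right; lra. }
    unfold M. assert (Habs := Rabs_triang (y1 s - y1 0) (y1 0)).
    replace (y1 s - y1 0 + y1 0) with (y1 s) in Habs by ring. lra. }
  destruct (Rle_or_lt 0 (W t)) as [H|H]; [exact H|exfalso].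
  assert (HM0 : 0 <= M) by (unfold M; assert (0 <= Rabs (y1 0)) by apply Rabs_pos; lra).
  set (s := Rmin (Rmin alp 1) (Rmin t (- W t / (M + 1))) / 2).
  assert (Hq : 0 < - W t / (M + 1)) by (apply Rdiv_lt_0_compat; lra).
  assert (Hs0 : 0 < s).
  { unfold s. apply Rdiv_lt_0_compat; [|lra]. repeat apply Rmin_glb_lt; lra. }
  assert (Hs1 : s < alp /\ s <= 1 /\ s <= t /\ s < - W t / (M + 1)).
  { unfold s. assert (H1 := Rmin_l (Rmin alp 1) (Rmin t (- W t / (M + 1)))).
    assert (H2 := Rmin_r (Rmin alp 1) (Rmin t (- W t / (M + 1)))).
    assert (H3 := Rmin_l alp 1). assert (H4 := Rmin_r alp 1).
    assert (H5 := Rmin_l t (- W t / (M + 1))). assert (H6 := Rmin_r t (- W t / (M + 1))).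
    lra. }
  assert (Hy := HM s (conj Hs0 (proj1 Hs1))).
  assert (HWs := HW s (conj Hs0 (proj1 (proj2 (proj2 Hs1))))).
  assert (Hsn : s ^ n <= s) by (apply pow_le_self; lra || lia).
  assert (Hsn0 : 0 <= s ^ n) by (apply pow_le; lra).
  assert (Hm : - M <= y1 s) by (pose proof (Rle_abs (- y1 s)) as HH; rewrite Rabs_Ropp in HH; lra).
  assert (W s >= - (s * M)) by (unfold W; nra).
  set (q := - W t / (M + 1)) in *.
  assert (Hq1 : q * (M + 1) = - W t) by (unfold q; field; lra).
  assert (s * M <= q * M) by nra.
  lra.
Qed.

Lemma exp_le a b : a <= b -> exp a <= exp b.
Proof. intros H; destruct H as [H|H]; [left; apply exp_increasing; exact H| right; rewrite H; reflexivity]. Qed.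

Lemma lt_exp y : 0 <= y -> y < exp y.
Proof.
  intros Hy. destruct (Req_dec y 0) as [->|Hn]; [rewrite exp_0; lra|].
  pose proof (exp_ineq1 y Hn). lra.
Qed.

Lemma exp_sq x : 0 <= x -> x * x / 4 < exp x.
Proof.
  intros Hx. replace x with (x/2 + x/2) at 3 by field. rewrite exp_plus.
  pose proof (lt_exp (x/2) ltac:(lra)). nra.
Qed.

Lemma Rpower_exp y p : Rpower (exp y) p = exp (p * y).
Proof. unfold Rpower. rewrite ln_exp. reflexivity. Qed.

Lemma INR_le_pow2 k : INR k <= 2 ^ k.
Proof.
  induction k as [|k IH]; [simpl; lra|].
  rewrite S_INR. simpl. assert (1 <= 2 ^ k) by (rewrite <- (pow1 k); apply pow_incr; lra). lra.
Qed.

Lemma div_le_compat_pos x y z : 0 <= x -> 0 < z -> z <= y -> x / y <= x / z.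
Proof.
  intros Hx Hz Hzy. unfold Rdiv. apply Rmult_le_compat_l; [lra|]. apply Rinv_le_contravar; lra.
Qed.

Definition ODEH (R0 p : R) (n : nat) (phi phi1 phi2 gam gam1 gam2 : R -> R) : Prop :=
  (forall t, 0 <= t < R0 -> derivable_pt_lim phi t (phi1 t) /\ derivable_pt_lim phi1 t (phi2 t)
      /\ derivable_pt_lim gam t (gam1 t) /\ derivable_pt_lim gam1 t (gam2 t)
      /\ 0 < phi t /\ 0 < gam t) /\
  continuity_pt phi1 0 /\ continuity_pt gam1 0 /\
  (forall t, 0 < t < R0 -> phi2 t + INR n * phi1 t / t = Rpower (gam t) p /\
        exp (phi1 t) <= gam2 t + INR n * gam1 t / t).

Lemma ode_signs R0 p n phi phi1 phi2 gam gam1 gam2 :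
  ODEH R0 p n phi phi1 phi2 gam gam1 gam2 -> (1 <= n)%nat -> 0 < R0 ->
  (forall t, 0 < t < R0 -> 0 <= t ^ n * phi1 t /\ 0 <= t ^ n * gam1 t
     /\ 0 <= phi1 t /\ 0 <= gam1 t) /\
  (forall s t, 0 <= s -> s <= t -> t < R0 -> phi s <= phi t /\ gam s <= gam t).
Proof.
  intros [Hd [Hc1 [Hc2 Heq]]] Hn HR.
  assert (H1 : forall t, 0 < t < R0 -> 0 <= t ^ n * phi1 t).
  { apply (weighted R0 n phi1 phi2); auto. intros t Ht; apply Hd; lra.
    intros t Ht. rewrite (proj1 (Heq t Ht)). left; apply Rpower_pos. }
  assert (H2 : forall t, 0 < t < R0 -> 0 <= t ^ n * gam1 t).
  { apply (weighted R0 n gam1 gam2); auto. intros t Ht; apply Hd; lra.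
    intros t Ht. eapply Rle_trans; [|apply (proj2 (Heq t Ht))]. left; apply exp_pos. }
  assert (H3 : forall t, 0 < t < R0 -> 0 <= phi1 t /\ 0 <= gam1 t).
  { intros t Ht. pose proof (pow_lt t n (proj1 Ht)). pose proof (H1 t Ht). pose proof (H2 t Ht).
    split; nra. }
  split.
  - intros t Ht. repeat split; try apply H1; try apply H2; try apply H3; auto.
  - intros s t Hs Hst Ht. split.
    + assert (0 * (t - s) <= phi t - phi s); [|lra].
      apply mvt_lb with (h' := phi1); [lra| intros c Hc; apply Hd; lra|].
      intros c Hc; apply H3; lra.
    + assert (0 * (t - s) <= gam t - gam s); [|lra].
      apply mvt_lb with (h' := gam1); [lra| intros c Hc; apply Hd; lra|].
      intros c Hc; apply H3; lra.
Qed.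

Lemma ode_bound R0 p n phi phi1 phi2 gam gam1 gam2 :
  ODEH R0 p n phi phi1 phi2 gam gam1 gam2 -> (1 <= n)%nat -> 0 < R0 -> 0 < p ->
  exists M, forall t, 0 <= t < R0 -> phi t <= M.
Proof.
  intros HO Hn HR Hp.
  destruct (ode_signs _ _ _ _ _ _ _ _ _ HO Hn HR) as [Hsg Hmono].
  destruct HO as [Hd [Hc1 [Hc2 Heq]]].
  set (a := R0 / 2).
  set (c1 := a ^ n). set (c2 := R0 ^ n).
  set (W := fun s => s ^ n * phi1 s). set (G := fun s => s ^ n * gam1 s).
  assert (Ha : 0 < a < R0) by (unfold a; lra).
  assert (Hc1p : 0 < c1) by (apply pow_lt; lra).
  assert (Hpw : forall t, a <= t < R0 -> c1 <= t ^ n /\ t ^ n <= c2).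
  { intros t Ht. split; apply pow_incr; lra. }
  assert (Hc12 : c1 <= c2) by (apply Hpw; lra).
  assert (HWd : forall t, 0 < t < R0 -> derivable_pt_lim W t (t ^ n * Rpower (gam t) p)).
  { intros t Ht. eapply dpl_eq. apply W_deriv; [lia|lra|apply Hd; lra].
    rewrite (proj1 (Heq t Ht)). reflexivity. }
  assert (HGd : forall t, 0 < t < R0 -> derivable_pt_lim G t (t ^ n * (gam2 t + INR n * gam1 t / t))).
  { intros t Ht. apply W_deriv; [lia|lra|apply Hd; lra]. }
  assert (HW0 : forall t, 0 < t < R0 -> 0 <= W t) by (intros t Ht; apply Hsg; exact Ht).
  assert (HG0 : forall t, 0 < t < R0 -> 0 <= G t) by (intros t Ht; apply Hsg; exact Ht).
  assert (HWm : forall s t, 0 < s -> s <= t -> t < R0 -> W s <= W t).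
  { intros s t Hs Hst Ht. assert (0 * (t - s) <= W t - W s); [|lra].
    apply mvt_lb with (h' := fun c => c ^ n * Rpower (gam c) p); [lra| intros c Hc; apply HWd; lra|].
    intros c Hc. apply Rmult_le_pos; [apply pow_le; lra| left; apply Rpower_pos]. }
  assert (Hphi1 : forall t, a <= t < R0 -> phi1 t = W t / t ^ n).
  { intros t Ht. unfold W. field. apply pow_nonzero. lra. }
  assert (Hgam1 : forall t, a <= t < R0 -> gam1 t = G t / t ^ n).
  { intros t Ht. unfold G. field. apply pow_nonzero. lra. }
  assert (Hinc : forall s t, a <= s -> s <= t -> t < R0 -> phi t - phi s <= W t / c1 * (t - s)).
  { intros s t Hs Hst Ht.
    apply mvt_ub with (h' := phi1); [lra| intros c Hc; apply Hd; lra|].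
    intros c Hc. rewrite Hphi1 by lra.
    apply Rle_trans with (W c / c1).
    - apply div_le_compat_pos; [apply HW0; lra| exact Hc1p| apply Hpw; lra].
    - unfold Rdiv. apply Rmult_le_compat_r; [left; apply Rinv_0_lt_compat; exact Hc1p|].
      apply HWm; lra. }
  assert (Hc2p : 0 < c2) by lra.
  set (kap := c1 / (16 * c2)). set (mu := p / (2 * c2)). set (lam := p / (2 * c2 * (2 * p + 1))).
  set (del := fun B => exp (- (lam * B))).
  set (A0 := 8 / (c1 * Rpower kap p * (mu * mu))).
  assert (Hkap : 0 < kap) by (unfold kap; apply Rdiv_lt_0_compat; lra).
  assert (Hmu : 0 < mu) by (unfold mu; apply Rdiv_lt_0_compat; lra).
  assert (Hlam : 0 < lam) by (unfold lam; apply Rdiv_lt_0_compat; nra).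
  assert (HRk : 0 < Rpower kap p) by apply Rpower_pos.
  assert (HA0 : 0 < A0).
  { unfold A0. apply Rdiv_lt_0_compat; [lra|]. apply Rmult_lt_0_compat; [nra|nra]. }
  assert (Hstep : forall s B, a <= s -> 0 < B -> A0 <= B -> B <= W s -> s + del B < R0 ->
                   2 * B < W (s + del B)).
  { intros s B Hs HB HAB HWs Hsd.
    set (d := del B).
    assert (Hd0 : 0 < d) by (unfold d, del; apply exp_pos).
    change (del B) with d in Hsd.
    assert (HWB : forall t, s <= t < R0 -> B <= W t).
    { intros t Ht. apply Rle_trans with (W s); [exact HWs| apply HWm; lra]. }
    assert (HGl : forall t, s <= t < R0 -> c1 * exp (B / c2) * (t - s) <= G t).
    { intros t Ht.
      assert (c1 * exp (B / c2) * (t - s) <= G t - G s); [|pose proof (HG0 s ltac:(lra)); lra].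
      apply mvt_lb with (h' := fun c => c ^ n * (gam2 c + INR n * gam1 c / c)); [lra| intros c Hc; apply HGd; lra|].
      intros c Hc.
      assert (He : exp (B / c2) <= exp (phi1 c)).
      { apply exp_le. rewrite Hphi1 by lra.
        apply Rle_trans with (W c / c2).
        - unfold Rdiv. apply Rmult_le_compat_r; [left; apply Rinv_0_lt_compat; lra| apply HWB; lra].
        - apply div_le_compat_pos; [apply HW0; lra| apply pow_lt; lra| apply Hpw; lra]. }
      pose proof (proj2 (Heq c ltac:(lra))) as Hq.
      pose proof (exp_pos (B / c2)). pose proof (Hpw c ltac:(lra)).
      apply Rmult_le_compat; lra. }
    set (beta := c1 / c2 * exp (B / c2) * (d / 4)).
    assert (Hbeta : 0 < beta).
    { unfold beta. pose proof (exp_pos (B / c2)).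
      apply Rmult_lt_0_compat; [apply Rmult_lt_0_compat; [apply Rdiv_lt_0_compat|]|]; lra. }
    assert (Hg1 : forall t, s + d / 4 <= t < R0 -> beta <= gam1 t).
    { intros t Ht. rewrite Hgam1 by lra.
      apply Rle_trans with (G t / c2).
      - unfold beta. pose proof (HGl t ltac:(lra)). pose proof (exp_pos (B / c2)).
        replace (c1 / c2 * exp (B / c2) * (d / 4)) with (c1 * exp (B / c2) * (d / 4) / c2) by (field; lra).
        unfold Rdiv at 1 3. apply Rmult_le_compat_r; [left; apply Rinv_0_lt_compat; lra|].
        apply Rle_trans with (c1 * exp (B / c2) * (t - s)); [|exact H].
        assert (0 <= c1 * exp (B / c2)) by nra. nra.
      - apply div_le_compat_pos; [apply HG0; lra| apply pow_lt; lra| apply Hpw; lra]. }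
    assert (Hgam : beta * (d / 4) <= gam (s + d / 2)).
    { assert (beta * ((s + d/2) - (s + d/4)) <= gam (s + d/2) - gam (s + d/4)).
      { apply mvt_lb with (h' := gam1).
        - lra.
        - intros c Hc. assert (Hc0 : 0 <= c < R0) by lra. apply (Hd c Hc0).
        - intros c Hc; apply Hg1; lra. }
      pose proof (proj2 (proj2 (proj2 (proj2 (proj2 (Hd (s + d/4) ltac:(lra))))))).
      replace (s + d / 2 - (s + d / 4)) with (d / 4) in H by field. lra. }
    assert (HWl : c1 * Rpower (beta * (d / 4)) p * ((s + d) - (s + d / 2)) <= W (s + d) - W (s + d / 2)).
    { apply mvt_lb with (h' := fun c => c ^ n * Rpower (gam c) p); [lra| intros c Hc; apply HWd; lra|].
      intros c Hc. apply Rmult_le_compat.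
      - lra.
      - left; apply Rpower_pos.
      - apply Hpw; lra.
      - apply Rle_Rpower_l; [lra|]. split; [nra|].
        apply Rle_trans with (gam (s + d / 2)); [exact Hgam|].
        apply Hmono; lra. }
    assert (HWsd : B <= W (s + d / 2)) by (apply HWB; lra).
    replace (s + d - (s + d / 2)) with (d / 2) in HWl by field.
    assert (Hbd : beta * (d / 4) = kap * exp (B / c2 + - (2 * (lam * B)))).
    { unfold beta, kap, d, del. rewrite exp_plus.
      replace (- (2 * (lam * B))) with (- (lam * B) + - (lam * B)) by ring. rewrite exp_plus.
      field. lra. }
    rewrite Hbd in HWl.
    rewrite <- Rpower_mult_distr in HWl by (try exact Hkap; apply exp_pos).
    rewrite Rpower_exp in HWl.
    assert (Hexp : c1 * (Rpower kap p * exp (p * (B / c2 + - (2 * (lam * B))))) * (d / 2)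
                   = c1 * Rpower kap p / 2 * exp (mu * B)).
    { unfold d, del. rewrite Rmult_assoc, Rmult_assoc.
      replace (mu * B) with (p * (B / c2 + - (2 * (lam * B))) + - (lam * B)).
      - rewrite exp_plus. field.
      - unfold mu, lam. field. lra. }
    rewrite Hexp in HWl.
    pose proof (exp_sq (mu * B) ltac:(nra)) as Hsq.
    assert (HB2 : B <= c1 * Rpower kap p / 2 * ((mu * B) * (mu * B) / 4)).
    { assert (Hx : 0 < c1 * Rpower kap p * (mu * mu)) by (apply Rmult_lt_0_compat; nra).
      unfold A0 in HAB.
      apply (Rmult_le_compat_r (c1 * Rpower kap p * (mu * mu))) in HAB; [|lra].
      replace (8 / (c1 * Rpower kap p * (mu * mu)) * (c1 * Rpower kap p * (mu * mu))) with 8 in HAB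
        by (field; lra).
      nra. }
    assert (0 < c1 * Rpower kap p / 2) by nra.
    assert (c1 * Rpower kap p / 2 * ((mu * B) * (mu * B) / 4) < c1 * Rpower kap p / 2 * exp (mu * B))
      by (apply Rmult_lt_compat_l; lra).
    lra. }
  assert (Hterm : forall B, 0 < B -> 2 * B * del B / c1 <= 8 / (c1 * (lam * lam) * B)).
  { intros B HB. unfold del. rewrite exp_Ropp.
    pose proof (exp_sq (lam * B) ltac:(nra)) as Hq. pose proof (exp_pos (lam * B)).
    assert (2 * B * / exp (lam * B) <= 8 / (lam * lam * B)).
    assert (Hll : 0 < lam * lam * B) by (apply Rmult_lt_0_compat; [apply Rmult_lt_0_compat|]; lra).
    { apply (Rmult_le_reg_r (exp (lam * B) * (lam * lam * B))); [apply Rmult_lt_0_compat; lra|].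
      replace (2 * B * / exp (lam * B) * (exp (lam * B) * (lam * lam * B))) with (2 * B * (lam * lam * B))
        by (field; lra).
      replace (8 / (lam * lam * B) * (exp (lam * B) * (lam * lam * B))) with (8 * exp (lam * B))
        by (field; lra).
      lra. }
    replace (8 / (c1 * (lam * lam) * B)) with (8 / (lam * lam * B) / c1) by (field; lra).
    unfold Rdiv at 1 3. apply Rmult_le_compat_r; [left; apply Rinv_0_lt_compat; lra| exact H0]. }
  destruct (classic (exists tA, a <= tA < R0 /\ A0 <= W tA)) as [[tA [HtA HWA]]|Hno].
  - set (C := 16 / (c1 * (lam * lam) * A0)).
    assert (Hl2 : 0 < lam * lam) by (apply Rmult_lt_0_compat; lra).
    assert (HC : 0 < C) by (unfold C; apply Rdiv_lt_0_compat; [lra|]; apply Rmult_lt_0_compat; [apply Rmult_lt_0_compat|]; lra).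
    assert (HP : forall k t, tA <= t < R0 -> W t <= 2 ^ k * A0 -> phi t <= phi tA + C * (2 - / 2 ^ k)).
    { induction k as [|k IH]; intros t Ht HWt.
      - simpl pow in *. rewrite Rinv_1.
        assert (Htd : t - tA <= del A0).
        { destruct (Rle_or_lt (t - tA) (del A0)) as [H|H]; [exact H|exfalso].
          pose proof (Hstep tA A0 ltac:(lra) HA0 ltac:(lra) HWA ltac:(lra)).
          pose proof (HWm (tA + del A0) t ltac:(unfold del in *; pose proof (exp_pos (- (lam * A0))); lra) ltac:(lra) ltac:(lra)).
          lra. }
        pose proof (Hinc tA t ltac:(lra) ltac:(lra) ltac:(lra)).
        pose proof (Hterm A0 HA0).
        assert (W t / c1 * (t - tA) <= 2 * A0 * del A0 / c1).
        { replace (2 * A0 * del A0 / c1) with (2 * A0 / c1 * del A0) by (field; lra).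
          apply Rmult_le_compat; [unfold Rdiv; apply Rmult_le_pos; [apply HW0; lra| left; apply Rinv_0_lt_compat; lra]|lra| |lra].
          unfold Rdiv. apply Rmult_le_compat_r; [left; apply Rinv_0_lt_compat; lra| lra]. }
        assert (8 / (c1 * (lam * lam) * A0) = C / 2) by (unfold C; field; nra).
        lra.
      - set (B := 2 ^ k * A0).
        assert (Hk1 : 1 <= 2 ^ k) by (rewrite <- (pow1 k); apply pow_incr; lra).
        assert (HB : 0 < B) by (unfold B; nra).
        assert (HBA : A0 <= B) by (unfold B; nra).
        replace (2 ^ S k * A0) with (2 * B) in HWt by (unfold B; simpl; ring).
        assert (Hdel : 0 < del B) by (unfold del; apply exp_pos).
        assert (HtB : 2 * B * del B / c1 <= C / 2 ^ S k).
        { eapply Rle_trans; [apply Hterm; exact HB|].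
          unfold C, B. simpl pow. right. field. repeat split; try (apply pow_nonzero); lra. }
        assert (HSk : / 2 ^ k = 2 * / 2 ^ S k) by (simpl; field; apply pow_nonzero; lra).
        assert (HSk0 : 0 < / 2 ^ S k) by (apply Rinv_0_lt_compat; apply pow_lt; lra).
        assert (HSk1 : / 2 ^ S k <= 1).
        { rewrite <- Rinv_1. apply Rinv_le_contravar; [lra|]. rewrite <- (pow1 (S k)). apply pow_incr; lra. }
        assert (Hfin : forall s, s <= t -> t - s <= del B -> W t / c1 * (t - s) <= C / 2 ^ S k).
        { intros s Hs1 Hs2. eapply Rle_trans; [|exact HtB].
          replace (2 * B * del B / c1) with (2 * B / c1 * del B) by (field; lra).
          apply Rmult_le_compat; [unfold Rdiv; apply Rmult_le_pos; [apply HW0; lra| left; apply Rinv_0_lt_compat; lra]|lra| |lra].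
          unfold Rdiv. apply Rmult_le_compat_r; [left; apply Rinv_0_lt_compat; lra| lra]. }
        destruct (Rle_or_lt (t - del B) tA) as [Hs|Hs].
        + pose proof (Hinc tA t ltac:(lra) ltac:(lra) ltac:(lra)).
          pose proof (Hfin tA ltac:(lra) ltac:(lra)).
          assert (C * / 2 ^ S k <= C * (2 - / 2 ^ S k)) by (apply Rmult_le_compat_l; lra).
          unfold Rdiv in *. lra.
        + set (s := t - del B).
          assert (HWs : W s <= B).
          { destruct (Rle_or_lt (W s) B) as [H|H]; [exact H|exfalso].
            pose proof (Hstep s B ltac:(unfold s; lra) HB HBA ltac:(lra) ltac:(unfold s; lra)) as H1.
            replace (s + del B) with t in H1 by (unfold s; ring). lra. }
          pose proof (IH s ltac:(unfold s; lra) HWs).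
          pose proof (Hinc s t ltac:(unfold s; lra) ltac:(unfold s; lra) ltac:(lra)).
          pose proof (Hfin s ltac:(unfold s; lra) ltac:(unfold s; lra)).
          rewrite HSk in H. unfold Rdiv in *. lra. }
    exists (phi tA + 2 * C). intros t Ht.
    destruct (Rle_or_lt tA t) as [H|H].
    + destruct (INR_unbounded (W t / A0)) as [k Hk].
      pose proof (INR_le_pow2 k).
      assert (W t <= 2 ^ k * A0).
      { apply Rle_trans with (W t / A0 * A0); [right; field; lra|].
        apply Rmult_le_compat_r; lra. }
      pose proof (HP k t ltac:(lra) H1).
      assert (0 < / 2 ^ k) by (apply Rinv_0_lt_compat; apply pow_lt; lra).
      nra.
    + pose proof (Hmono t tA ltac:(lra) ltac:(lra) ltac:(lra)). lra.
  - exists (phi a + A0 / c1 * R0). intros t Ht.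
    assert (0 <= A0 / c1 * R0) by (apply Rmult_le_pos; [unfold Rdiv; apply Rmult_le_pos; [lra| left; apply Rinv_0_lt_compat; lra]|lra]).
    destruct (Rle_or_lt a t) as [Hat|Hat].
    + pose proof (Hinc a t ltac:(lra) ltac:(lra) ltac:(lra)).
      assert (W t < A0) by (destruct (Rlt_or_le (W t) A0) as [H2|H2]; [exact H2| exfalso; apply Hno; exists t; split; [lra|exact H2]]).
      assert (W t / c1 * (t - a) <= A0 / c1 * R0).
      { apply Rmult_le_compat; [unfold Rdiv; apply Rmult_le_pos; [apply HW0; lra| left; apply Rinv_0_lt_compat; lra]|lra| |lra].
        unfold Rdiv. apply Rmult_le_compat_r; [left; apply Rinv_0_lt_compat; lra| lra]. }
      lra.
    + pose proof (Hmono t a ltac:(lra) ltac:(lra) ltac:(lra)). lra.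
Qed.
Definition axis (t : R) : vec := fun j => if Nat.eqb j 0 then t else 0.

Lemma sumN_ext n f g : (forall i, (i < n)%nat -> f i = g i) -> sumN n f = sumN n g.
Proof.
  induction n as [|n IH]; intros H; simpl; [reflexivity|].
  rewrite IH by (intros; apply H; lia). rewrite H by lia. reflexivity.
Qed.

Lemma sumN_plus n f g : sumN n (fun j => f j + g j) = sumN n f + sumN n g.
Proof. induction n as [|n IH]; simpl; [ring|]. rewrite IH. ring. Qed.

Lemma sumN_single n k c : (k < n)%nat -> sumN n (fun j => if Nat.eqb j k then c else 0) = c.
Proof.
  induction n as [|n IH]; intros Hk; [lia|]. simpl.
  destruct (Nat.eqb_spec n k) as [->|Hne].
  - rewrite (sumN_ext _ _ (fun _ => 0)).
    + assert (Z : forall m, sumN m (fun _ => 0) = 0) by (induction m; simpl; [ring| rewrite IHm; ring]).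
      rewrite Z. ring.
    + intros i Hi. destruct (Nat.eqb_spec i k); [lia|reflexivity].
  - rewrite IH by lia. ring.
Qed.

Lemma sumN_lap n (F : nat -> R) b : (forall j, (1 <= j < S n)%nat -> F j = b) ->
  sumN (S n) F = F 0%nat + INR n * b.
Proof.
  induction n as [|n IH]; intros H; [simpl; ring|].
  change (sumN (S (S n)) F) with (sumN (S n) F + F (S n)).
  rewrite IH by (intros; apply H; lia). rewrite (H (S n)) by lia. rewrite S_INR. ring.
Qed.

Lemma sumN_ge0 n (F : nat -> R) : (forall j, 0 <= F j) -> F 0%nat <= sumN (S n) F.
Proof.
  intros H. induction n as [|n IH]; [simpl; lra|].
  change (sumN (S (S n)) F) with (sumN (S n) F + F (S n)). pose proof (H (S n)). lra.
Qed.

Lemma normN_axis N t : (1 <= N)%nat -> normN N (axis t) = Rabs t.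
Proof.
  intros HN. unfold normN.
  rewrite (sumN_ext _ _ (fun j => if Nat.eqb j 0 then t ^ 2 else 0)).
  - rewrite sumN_single by lia. rewrite <- Rsqr_pow2. apply sqrt_Rsqr_abs.
  - intros i Hi. unfold axis. destruct (Nat.eqb i 0); ring.
Qed.

Lemma shift_axis0 t h : shift (axis t) 0 h = axis (t + h).
Proof.
  apply functional_extensionality; intros j. unfold shift, axis.
  destruct (Nat.eqb j 0); reflexivity.
Qed.

Lemma shift_shift x i s h : shift (shift x i s) i h = shift x i (s + h).
Proof.
  apply functional_extensionality; intros j. unfold shift.
  destruct (Nat.eqb j i); ring.
Qed.

Lemma vsub_axis r t : vsub (axis r) (axis t) = axis (r - t).
Proof.
  apply functional_extensionality; intros j. unfold vsub, axis.
  destruct (Nat.eqb j 0); ring.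
Qed.

Lemma normN_yshift N t i s : (1 <= i)%nat -> (i < N)%nat ->
  normN N (shift (axis t) i s) = sqrt (t ^ 2 + s ^ 2).
Proof.
  intros Hi HiN. unfold normN. f_equal.
  rewrite (sumN_ext _ _ (fun j => (if Nat.eqb j 0 then t ^ 2 else 0) + (if Nat.eqb j i then s ^ 2 else 0))).
  - rewrite sumN_plus, !sumN_single by lia. reflexivity.
  - intros j Hj. unfold shift, axis.
    destruct (Nat.eqb_spec j i) as [->|Hne].
    + destruct (Nat.eqb_spec i 0); [lia|]. ring.
    + destruct (Nat.eqb j 0); ring.
Qed.

Lemma D0 F x0 l : derivable_pt_lim (fun h => F (x0 + h)) 0 l -> derivable_pt_lim F x0 l.
Proof.
  intros H eps Heps. destruct (H eps Heps) as [d Hd]. exists d. intros h Hh Hhd.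
  pose proof (Hd h Hh Hhd) as HH. rewrite Rplus_0_l, Rplus_0_r in HH. exact HH.
Qed.

Lemma D0' F x0 l : derivable_pt_lim F x0 l -> derivable_pt_lim (fun h => F (x0 + h)) 0 l.
Proof.
  intros H eps Heps. destruct (H eps Heps) as [d Hd]. exists d. intros h Hh Hhd.
  rewrite Rplus_0_l, Rplus_0_r. exact (Hd h Hh Hhd).
Qed.

Lemma Dloc f g x l d : derivable_pt_lim f x l -> 0 < d ->
  (forall y, Rabs (y - x) < d -> f y = g y) -> derivable_pt_lim g x l.
Proof.
  intros H Hd Heq eps Heps. destruct (H eps Heps) as [del Hdel].
  assert (Hm : 0 < Rmin del d) by (apply Rmin_glb_lt; [apply cond_pos|lra]).
  exists (mkposreal _ Hm). intros h Hh Hhd. simpl in Hhd.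
  rewrite <- !Heq.
  - apply Hdel; [exact Hh|]. pose proof (Rmin_l del d). lra.
  - unfold Rminus. rewrite Rplus_opp_r, Rabs_R0. lra.
  - replace (x + h - x) with h by ring. pose proof (Rmin_r del d). lra.
Qed.

Lemma Dprod0 (H : R -> R) : continuity_pt H 0 -> derivable_pt_lim (fun h => h * H h) 0 (H 0).
Proof.
  intros Hc eps Heps. destruct (Hc eps Heps) as [alp [Halp Hal]].
  exists (mkposreal _ Halp). intros h Hh Hhd. simpl in Hhd.
  replace ((0 + h) * H (0 + h) - 0 * H 0) with (h * H h) by (rewrite Rplus_0_l; ring).
  replace (h * H h / h - H 0) with (H h - H 0) by (field; exact Hh).
  pose proof (Hal h) as HH. simpl in HH. unfold R_dist in HH. apply HH.
  split; [split; [exact I| auto]|]. rewrite Rminus_0_r. exact Hhd.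
Qed.

Lemma axis_in_ball N R0 r : (1 <= N)%nat -> Rabs r < R0 -> in_ball N R0 (axis r).
Proof. intros HN Hr. unfold in_ball. rewrite normN_axis by exact HN. exact Hr. Qed.

Lemma axis_basic N R0 f Df D2f :
  (2 <= N)%nat -> C2_on_ball N R0 f Df D2f ->
  forall r, Rabs r < R0 -> derivable_pt_lim (fun r => f (axis r)) r (Df 0%nat (axis r)) /\
       derivable_pt_lim (fun r => Df 0%nat (axis r)) r (D2f 0%nat 0%nat (axis r)) /\
       continuity_pt (fun r => Df 0%nat (axis r)) r.
Proof.
  intros HN [Hp [Hcf [Hcd Hcd2]]] r Hr.
  destruct (Hp (axis r) (axis_in_ball N R0 r ltac:(lia) Hr) 0%nat ltac:(lia)) as [H1 H2].
  specialize (H2 0%nat ltac:(lia)). unfold is_partial in H1, H2.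
  rewrite (functional_extensionality _ (fun h => f (axis (r + h)))) in H1
    by (intro; rewrite shift_axis0; reflexivity).
  rewrite (functional_extensionality _ (fun h => Df 0%nat (axis (r + h)))) in H2
    by (intro; rewrite shift_axis0; reflexivity).
  split; [apply D0; exact H1|]. split; [apply D0; exact H2|].
  unfold continuity_pt, continue_in, limit1_in, limit_in. intros eps Heps.
  destruct (Hcd 0%nat ltac:(lia) (axis r) (axis_in_ball N R0 r ltac:(lia) Hr) eps Heps) as [del [Hdel Hd]].
  exists (Rmin del (R0 - Rabs r)). split; [apply Rmin_glb_lt; lra|].
  intros x [_ Hx]. change R in x. simpl in Hx |- *. unfold R_dist in *.
  pose proof (Rmin_l del (R0 - Rabs r)). pose proof (Rmin_r del (R0 - Rabs r)).
  apply Hd.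
  - apply axis_in_ball; [lia|]. pose proof (Rabs_triang r (x - r)).
    replace (r + (x - r)) with x in H3 by ring. lra.
  - rewrite vsub_axis, normN_axis by lia. lra.
Qed.

Lemma radial_second N R0 f Df D2f t i :
  (2 <= N)%nat -> C2_on_ball N R0 f Df D2f -> radial_on_ball N R0 f ->
  0 < t < R0 -> (1 <= i)%nat -> (i < N)%nat ->
  D2f i i (axis t) = Df 0%nat (axis t) / t.
Proof.
  intros HN HC Hrad Ht Hi HiN.
  pose proof (axis_basic N R0 f Df D2f HN HC) as Hab.
  destruct HC as [Hp [Hcf [Hcd Hcd2]]].
  set (phi := fun r => f (axis r)). set (phi1 := fun r => Df 0%nat (axis r)).
  set (rho := fun s => sqrt (t ^ 2 + s ^ 2)).
  assert (Hpos : forall s, 0 < t ^ 2 + s ^ 2).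
  { intros s. pose proof (pow_lt t 2 ltac:(lra)). pose proof (pow2_ge_0 s). lra. }
  assert (Hrge : forall s, t <= rho s).
  { intros s. unfold rho. rewrite <- (sqrt_pow2 t) at 1 by lra. apply sqrt_le_1_alt.
    pose proof (pow2_ge_0 s). lra. }
  assert (Hrho0 : rho 0 = t).
  { unfold rho. replace (t ^ 2 + 0 ^ 2) with (t ^ 2) by ring. apply sqrt_pow2. lra. }
  assert (Hrlt : forall s, Rabs s < R0 - t -> rho s < R0).
  { intros s Hs. unfold rho. rewrite <- (sqrt_pow2 R0) by lra. apply sqrt_lt_1_alt.
    split; [left; apply Hpos|]. rewrite <- (pow2_abs s). pose proof (Rabs_pos s). nra. }
  assert (Hiny : forall s, Rabs s < R0 - t -> in_ball N R0 (shift (axis t) i s)).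
  { intros s Hs. unfold in_ball. rewrite normN_yshift by lia. apply Hrlt; exact Hs. }
  assert (Hrabs : forall s, Rabs (rho s) = rho s).
  { intros s. apply Rabs_pos_eq. pose proof (Hrge s). lra. }
  assert (Hfy : forall s, Rabs s < R0 - t -> f (shift (axis t) i s) = phi (rho s)).
  { intros s Hs. unfold phi. apply Hrad.
    - apply Hiny; exact Hs.
    - apply axis_in_ball; [lia|]. rewrite Hrabs. apply Hrlt; exact Hs.
    - rewrite normN_yshift, normN_axis by lia. rewrite Hrabs. reflexivity. }
  assert (Hrd : forall s, derivable_pt_lim rho s (s / rho s)).
  { intros s.
    pose proof (derivable_pt_lim_plus _ _ s _ _ (derivable_pt_lim_const (t ^ 2) s) (derivable_pt_lim_pow s 2)) as Hg.
    unfold plus_fct, fct_cte in Hg.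
    pose proof (derivable_pt_lim_comp (fun s => t ^ 2 + s ^ 2) sqrt s _ _ Hg
                  (derivable_pt_lim_sqrt _ (Hpos s))) as Hc.
    eapply dpl_eq; [exact Hc|]. unfold rho. change (Init.Nat.pred 2) with 1%nat. rewrite pow_1. replace (INR 2) with 2 by (simpl; ring).
    assert (0 < sqrt (t ^ 2 + s ^ 2)) by (apply sqrt_lt_R0; apply Hpos).
    field. lra. }
  assert (HDi : forall s, Rabs s < R0 - t -> Df i (shift (axis t) i s) = phi1 (rho s) * (s / rho s)).
  { intros s Hs.
    destruct (Hp _ (Hiny s Hs) i HiN) as [Hpi _]. unfold is_partial in Hpi.
    rewrite (functional_extensionality _ (fun h => f (shift (axis t) i (s + h)))) in Hpi
      by (intro; rewrite shift_shift; reflexivity).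
    apply (D0 (fun s => f (shift (axis t) i s))) in Hpi.
    assert (Hcomp : derivable_pt_lim (fun s => phi (rho s)) s (phi1 (rho s) * (s / rho s))).
    { apply (derivable_pt_lim_comp rho phi s). apply Hrd.
      unfold phi, phi1. apply Hab. rewrite Hrabs. apply Hrlt; exact Hs. }
    assert (Hcomp2 : derivable_pt_lim (fun s => f (shift (axis t) i s)) s (phi1 (rho s) * (s / rho s))).
    { apply (Dloc _ _ s _ (R0 - t - Rabs s) Hcomp); [lra|].
      intros y Hy. symmetry. apply Hfy. pose proof (Rabs_triang s (y - s)).
      replace (s + (y - s)) with y in H by ring. lra. }
    exact (uniqueness_limite _ _ _ _ Hpi Hcomp2). }
  destruct (Hp (axis t) (axis_in_ball N R0 t ltac:(lia) ltac:(rewrite Rabs_pos_eq; lra)) i HiN) as [_ H2].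
  specialize (H2 i HiN). unfold is_partial in H2.
  set (Hh := fun h => phi1 (rho h) / rho h).
  assert (Hrc : continuity_pt rho 0).
  { apply derivable_continuous_pt. exists (0 / rho 0). apply Hrd. }
  assert (Hhc : continuity_pt Hh 0).
  { change (continuity_pt (div_fct (comp phi1 rho) rho) 0).
    apply continuity_pt_div; [| exact Hrc| rewrite Hrho0; lra].
    apply continuity_pt_comp; [exact Hrc|]. rewrite Hrho0.
    apply Hab. rewrite Rabs_pos_eq; lra. }
  pose proof (Dprod0 Hh Hhc) as HD.
  assert (HD2 : derivable_pt_lim (fun h => Df i (shift (axis t) i h)) 0 (Hh 0)).
  { apply (Dloc _ _ 0 _ (R0 - t) HD); [lra|].
    intros y Hy. rewrite Rminus_0_r in Hy. rewrite HDi by exact Hy. unfold Hh.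
    pose proof (Hrge y). field. lra. }
  rewrite (uniqueness_limite _ _ _ _ H2 HD2). unfold Hh. rewrite Hrho0. reflexivity.
Qed.

Lemma lap_axis N R0 f Df D2f t : (2 <= N)%nat -> C2_on_ball N R0 f Df D2f -> radial_on_ball N R0 f ->
  0 < t < R0 ->
  laplacian N D2f (axis t) = D2f 0%nat 0%nat (axis t) + INR (N - 1) * Df 0%nat (axis t) / t.
Proof.
  intros HN HC Hr Ht. unfold laplacian. destruct N as [|m]; [lia|]. replace (S m - 1)%nat with m by lia.
  rewrite (sumN_lap m (fun i => D2f i i (axis t)) (Df 0%nat (axis t) / t)).
  - unfold Rdiv; ring.
  - intros j Hj. apply (radial_second (S m) R0 f Df D2f t j); auto; lia.
Qed.

Lemma grad_ge N Df x : (1 <= N)%nat -> Df 0%nat x <= grad_norm N Df x.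
Proof.
  intros HN. unfold grad_norm. destruct N as [|N]; [lia|].
  eapply Rle_trans; [apply Rle_abs|]. rewrite <- sqrt_Rsqr_abs, Rsqr_pow2. apply sqrt_le_1_alt.
  apply (sumN_ge0 N (fun i => Df i x ^ 2)). intros; apply pow2_ge_0.
Qed.

Lemma radial_val N R0 f x : (1 <= N)%nat -> radial_on_ball N R0 f -> in_ball N R0 x ->
  f x = f (axis (normN N x)).
Proof.
  intros HN Hr Hx. assert (Hn : 0 <= normN N x) by (unfold normN; apply sqrt_pos).
  apply Hr; [exact Hx| |].
  - apply axis_in_ball; [exact HN|]. rewrite Rabs_pos_eq by exact Hn. exact Hx.
  - rewrite normN_axis by exact HN. rewrite Rabs_pos_eq by exact Hn. reflexivity.
Qed.

Theorem corollary2p2 (N : nat) (R0 p : R) (u v : vec -> R) :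
  (2 <= N)%nat -> 0 < R0 -> 0 < p ->
  pos_radial_solution N R0 p u v ->
  (bounded_on_ball N R0 u /\ bounded_on_ball N R0 v) \/
  (bounded_on_ball N R0 u /\ blows_up_at_boundary N R0 v).
Proof.
  intros HN HR Hp [Du [D2u [Dv [D2v [HCu [HCv [Hru [Hrv [Hpos Heqs]]]]]]]]].
  set (phi := fun r => u (axis r)). set (phi1 := fun r => Du 0%nat (axis r)).
  set (phi2 := fun r => D2u 0%nat 0%nat (axis r)).
  set (gam := fun r => v (axis r)). set (gam1 := fun r => Dv 0%nat (axis r)).
  set (gam2 := fun r => D2v 0%nat 0%nat (axis r)).
  assert (HO : ODEH R0 p (N - 1) phi phi1 phi2 gam gam1 gam2).
  { split; [|split; [|split]].
    - intros t Ht. assert (Hta : Rabs t < R0) by (rewrite Rabs_pos_eq; lra).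
      destruct (axis_basic N R0 u Du D2u HN HCu t Hta) as [A1 [A2 _]].
      destruct (axis_basic N R0 v Dv D2v HN HCv t Hta) as [B1 [B2 _]].
      destruct (Hpos (axis t) (axis_in_ball N R0 t ltac:(lia) Hta)) as [P1 P2].
      repeat split; assumption.
    - apply (axis_basic N R0 u Du D2u HN HCu 0). rewrite Rabs_R0; lra.
    - apply (axis_basic N R0 v Dv D2v HN HCv 0). rewrite Rabs_R0; lra.
    - intros t Ht. assert (Hta : Rabs t < R0) by (rewrite Rabs_pos_eq; lra).
      destruct (Heqs (axis t) (axis_in_ball N R0 t ltac:(lia) Hta)) as [E1 E2].
      rewrite (lap_axis N R0 u Du D2u t HN HCu Hru Ht) in E1.
      rewrite (lap_axis N R0 v Dv D2v t HN HCv Hrv Ht) in E2.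
      split; [exact E1|]. unfold gam2, gam1, phi1. rewrite E2. apply exp_le. apply grad_ge. lia. }
  assert (Hn1 : (1 <= N - 1)%nat) by lia.
  destruct (ode_bound _ _ _ _ _ _ _ _ _ HO Hn1 HR Hp) as [M HM].
  destruct (ode_signs _ _ _ _ _ _ _ _ _ HO Hn1 HR) as [_ Hmono].
  assert (Hnx : forall x, in_ball N R0 x -> 0 <= normN N x < R0).
  { intros x Hx. split; [unfold normN; apply sqrt_pos| exact Hx]. }
  assert (Hub : bounded_on_ball N R0 u).
  { exists M. intros x Hx. destruct (Hpos x Hx) as [P1 _]. rewrite Rabs_pos_eq by lra.
    rewrite (radial_val N R0 u x ltac:(lia) Hru Hx). apply HM. apply Hnx; exact Hx. }
  destruct (classic (exists M', forall t, 0 <= t < R0 -> gam t <= M')) as [[M' HM']|Hno].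
  - left. split; [exact Hub|]. exists M'. intros x Hx. destruct (Hpos x Hx) as [_ P2].
    rewrite Rabs_pos_eq by lra.
    rewrite (radial_val N R0 v x ltac:(lia) Hrv Hx). apply HM'. apply Hnx; exact Hx.
  - right. split; [exact Hub|]. intros K.
    destruct (classic (exists t0, 0 <= t0 < R0 /\ K < gam t0)) as [[t0 [Ht0 Hgt]]|Hn].
    + exists (R0 - t0). split; [lra|]. intros x Hx Hxt.
      rewrite (radial_val N R0 v x ltac:(lia) Hrv Hx).
      pose proof (Hnx x Hx).
      destruct (Hmono t0 (normN N x) ltac:(lra) ltac:(lra) ltac:(lra)) as [_ Hg].
      unfold gam in Hg, Hgt. lra.
    + exfalso. apply Hno. exists K. intros t Ht.
      destruct (Rle_or_lt (gam t) K) as [H|H]; [exact H|]. exfalso. apply Hn. exists t. split; assumption.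
Qed.
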